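(* Let $n\ge 1$ be an integer and $K=L=T=n^2$. For $r\in\{1,\ldots,n^2\}$ let $N(r)$ be the number of distinct integers in $\operatorname{Set}(\alpha)+\operatorname{Set}(\beta)$ for the $\mathsf{GASP}_r$ vectors $(\alpha,\beta)$ with these parameters. Then the minimum of $N(r)$ over $r\in\{1,\ldots,n^2\}$ is attained at $r=n$, and $N(n)=3$ if $n=1$, and $N(n)=n^4+2n^3+2n^2-n-2$ if $n\ge 2$.
   Context: For positive integers $K,L,T,r$ with $L\le K$ and $1\le r\le\min\{K,T\}$, the code $\mathsf{GASP}_r$ is given by the integer vectors $\alpha=(\alpha_{\mathrm p}\mid\alpha_{\mathrm s})$ and $\beta=(\beta_{\mathrm p}\mid\beta_{\mathrm s})$ (concatenations), where $\alpha_{\mathrm p}=(0,1,\ldots,K-1)$; $\alpha_{\mathrm s}$ is the vector of the $T$ smallest elements of $\{KL+j+Kt : 0\le j\le r-1,\ t\in\mathbb{Z}_{\ge 0}\}$ in increasing order; $\beta_{\mathrm p}=(0,K,\ldots,K(L-1))$; $\beta_{\mathrm s}=(KL,KL+1,\ldots,KL+T-1)$. $\operatorname{Set}(v)$ denotes the set of entries of $v$, and $A+B=\{a+b:a\in A,b\in B\}$. *)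

(* Defs.v *)
From mathcomp Require Import all_boot.
Set Implicit Arguments. Unset Strict Implicit. Unset Printing Implicit Defensive.

(* Membership in the secret-exponent set
   S = { K*L + j + K*t : 0 <= j <= r-1, t >= 0 }  (for r <= K the (j,t) are
   recovered as j = (x - K*L) mod K, t = (x - K*L) div K). *)
Definition gasp_S (K L r x : nat) : bool :=
  (K * L <= x) && ((x - K * L) %% K < r).

(* All elements
   K*L + j + K*t with j < r, t < T lie below K*L + K*T, and there are r*T >= T
   of them, so filtering the increasing range [0, K*L + K*T) and keeping the
   first T entries yields exactly the T smallest elements of S. *)
Definition alpha_s (K L T r : nat) : seq nat :=
  take T [seq x <- iota 0 (K * L + K * T) | gasp_S K L r x].

Definition alpha_p (K : nat) : seq nat := iota 0 K.
Definition beta_p (K L : nat) : seq nat := [seq K * i | i <- iota 0 L].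
Definition beta_s (K L T : nat) : seq nat := iota (K * L) T.

Definition gasp_alpha (K L T r : nat) : seq nat := alpha_p K ++ alpha_s K L T r.
Definition gasp_beta (K L T : nat) : seq nat := beta_p K L ++ beta_s K L T.

Definition sumset_size (a b : seq nat) : nat :=
  size (undup [seq x + y | x <- a, y <- b]).

Definition N_gasp (n r : nat) : nat :=
  sumset_size (gasp_alpha (n ^ 2) (n ^ 2) (n ^ 2) r) (gasp_beta (n ^ 2) (n ^ 2) (n ^ 2)).

(* Main.v *)
From Stdlib Require Import ZArith Lia.
Require Import Defs.
From mathcomp Require Import all_boot.
From mathcomp Require Import zify.
Open Scope Z_scope.
Lemma arithZ n r q s : 2 <= n -> 1 <= r <= n^2 -> n^2 - 1 = q*r + s -> 0 <= s < r -> 0 <= q ->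
  n*(n^2-2) + (n-1) + n^2*(n-1) <= (n^2-2)*r + s + n^2*q.
Proof.
intros hn hr he hs hq.
assert (E1 : r*(n^2*q) = n^2*(n^2-1-s)) by (rewrite he; ring).
assert (E : r*((n^2-2)*r + s + n^2*q) - r*(n*(n^2-2) + (n-1) + n^2*(n-1))
   = (n^2*(r-n)^2 - r*(r-n)) + (r-1-s)*(n^2-r)).
{ rewrite Z.mul_add_distr_l E1. ring. }
assert (P1 : 0 <= n^2*(r-n)^2 - r*(r-n)).
{ destruct (Z.le_gt_cases r n) as [h|h].
  - assert (0 <= r*(n-r)) by (apply Z.mul_nonneg_nonneg; lia).
    assert (0 <= n^2*(r-n)^2) by (apply Z.mul_nonneg_nonneg; nia).
    nia.
  - set (d := r - n). assert (hd : 1 <= d) by lia.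
    assert (n <= (n^2-1)*d) by nia.
    assert (d*n <= d*((n^2-1)*d)) by (apply Z.mul_le_mono_nonneg_l; lia).
    replace r with (n+d) by lia. nia. }
assert (P2 : 0 <= (r-1-s)*(n^2-r)) by (apply Z.mul_nonneg_nonneg; lia).
assert (0 <= r*(((n^2-2)*r + s + n^2*q) - (n*(n^2-2) + (n-1) + n^2*(n-1)))) by (rewrite Z.mul_sub_distr_l; lia).
apply Z.mul_nonneg_cancel_l in H; lia.
Qed.
Close Scope Z_scope.
Lemma arith n r q s : (2 <= n)%N -> (1 <= r <= n^2)%N -> (n^2 - 1 = q*r + s)%N -> (s < r)%N ->
  (n*(n^2-2) + (n-1) + n^2*(n-1) <= (n^2-2)*r + s + n^2*q)%N.
Proof.
move=> h1 h2 h3 h4.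
have := arithZ (Z.of_nat n) (Z.of_nat r) (Z.of_nat q) (Z.of_nat s).
lia.
Qed.


Definition gg (m r i : nat) := m*m + i %% r + m * (i %/ r).

Lemma ggE m r t j : j < r -> gg m r (t*r + j) = m*m + j + m*t.
Proof.
move=> hj; have r0 : 0 < r by lia.
rewrite /gg modnMDl modn_small // divnMDl // divn_small // addn0.
by [].

Qed.

Lemma ggdec r i : 0 < r -> exists t j, j < r /\ i = t*r + j.
Proof. move=> r0; exists (i %/ r), (i %% r); split; [exact: ltn_pmod | exact: divn_eq]. Qed.

Lemma gg_step m r i : 0 < r -> r <= m -> gg m r i < gg m r i.+1 /\ gg m r i.+1 <= gg m r i + m.
Proof.
move=> r0 rm; have [t [j [hj ->]]] := ggdec r i r0.
rewrite ggE //; case: (ltnP j.+1 r) => h.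
  have -> : (t*r+j).+1 = t*r + j.+1 by lia.
  rewrite ggE //; lia.
have -> : (t*r+j).+1 = t.+1*r + 0 by rewrite mulSn; lia.
rewrite ggE // mulnS; lia.
Qed.

Lemma gg_le m r i k : 0 < r -> r <= m -> i <= k -> gg m r i <= gg m r k.
Proof.
move=> r0 rm; elim: k => [|k IH]; first by rewrite leqn0 => /eqP ->.
rewrite leq_eqVlt => /orP [/eqP -> //|h].
apply: leq_trans (IH h) _; have [h2 _] := gg_step m r k r0 rm; lia.
Qed.

Lemma gg0 m r : gg m r 0 = m*m.
Proof. by rewrite /gg mod0n div0n muln0 !addn0. Qed.

Lemma gasp_S_gg m r x : 0 < r -> r <= m -> gasp_S m m r x -> exists i, x = gg m r i.
Proof.
move=> r0 rm /andP [h1 h2].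
have m0 : 0 < m by lia.
exists ((x - m*m) %/ m * r + (x - m*m) %% m).
rewrite ggE //; have := divn_eq (x - m*m) m; lia.
Qed.

Lemma gg_gasp_S m r i : 0 < r -> r <= m -> gasp_S m m r (gg m r i).
Proof.
move=> r0 rm; have [t [j [hj ->]]] := ggdec r i r0.
rewrite /gasp_S ggE //; apply/andP; split; first lia.
have -> : m*m + j + m*t - m*m = (t * m) + j by lia.
rewrite modnMDl modn_small //; lia.
Qed.

Lemma filter_gg m r k : 0 < r -> r <= m ->
  [seq x <- iota 0 (gg m r k) | gasp_S m m r x] = map (gg m r) (iota 0 k).
Proof.
move=> r0 rm; elim: k => [|k IH].
  rewrite gg0 /=; rewrite (eq_in_filter (a2 := pred0)) ?filter_pred0 //.
  by move=> x; rewrite mem_iota /gasp_S /= => h; apply/negbTE; lia.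
have [s1 s2] := gg_step m r k r0 rm.
have -> : gg m r k.+1 = gg m r k + (gg m r k.+1 - gg m r k).-1.+1 by lia.
rewrite iotaD filter_cat IH add0n /= gg_gasp_S // ; try lia.
rewrite (eq_in_filter (a2 := pred0)) ?filter_pred0.
  by rewrite -[RHS]/(map (gg m r) (iota 0 k.+1)) -addn1 iotaD map_cat.
move=> x; rewrite mem_iota => /andP [hx1 hx2] /=; apply/negP => /(gasp_S_gg m r x r0 rm) [i hi].
subst x; case: (leqP i k) => hik.
  have := gg_le m r _ _ r0 rm hik; lia.
have := gg_le m r _ _ r0 rm hik; lia.
Qed.

Lemma alpha_sE m r : 0 < r -> r <= m -> alpha_s m m m r = map (gg m r) (iota 0 m).
Proof.
move=> r0 rm; have m0 : 0 < m by lia.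
set m' := m.-1; have em : m = m'.+1 by lia.
have hb : gg m r m' < m*m + m*m.
  rewrite /gg; have := ltn_pmod m' r0; have := leq_div m' r; nia.
rewrite /alpha_s.
have -> : m*m + m*m = gg m r m' + (m*m + m*m - gg m r m').-1.+1 by lia.
rewrite iotaD filter_cat filter_gg // add0n /= gg_gasp_S // ; try lia.
have e1 : (m < m') = false by lia.
have e2 : m - m' = 1 by lia.
rewrite take_cat size_map size_iota e1 e2.
have -> : iota 0 m = iota 0 (m' + 1) by rewrite addn1 -em.
by rewrite iotaD map_cat /= take0.
Qed.

Lemma mem_alphaP m r a : 0 < r -> r <= m ->
  a \in gasp_alpha m m m r <-> a < m \/ exists2 i, i < m & a = gg m r i.
Proof.
move=> r0 rm; rewrite /gasp_alpha mem_cat /alpha_p mem_iota alpha_sE //; split.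
  case/orP => [h|/mapP [i hi ->]]; [left; lia | right; exists i => //; move: hi; rewrite mem_iota; lia].
case => [h | [i hi ->]]; apply/orP; [left; lia | right; apply/mapP; exists i => //; rewrite mem_iota; lia].
Qed.

Lemma mem_betaP m b :
  b \in gasp_beta m m m <-> (exists2 k, k < m & b = m*k) \/ (m*m <= b < m*m + m).
Proof.
rewrite /gasp_beta mem_cat /beta_p /beta_s mem_iota; split.
  case/orP => [/mapP [k hk ->]|h]; [left; exists k => //; move: hk; rewrite mem_iota; lia | by right].
case => [[k hk ->]|h]; apply/orP; [left; apply/mapP; exists k => //; rewrite mem_iota; lia | by right].
Qed.

Definition P m r x := (x < m*m + 2*m - 1) || ((x < 2*(m*m)) && (x %% m < r))
   || ((2*(m*m) <= x) && (x < m*m + gg m r (m-1) + m)).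

Lemma cover m r k y : 0 < r -> r <= m -> gg m r 0 <= y -> y < gg m r k + m ->
  exists i, i <= k /\ gg m r i <= y < gg m r i + m.
Proof.
move=> r0 rm; elim: k => [|k IH] h1 h2; first by exists 0; lia.
case: (leqP (gg m r k.+1) y) => h3; first by exists k.+1; lia.
have [s1 s2] := gg_step m r k r0 rm.
have [i [hi1 hi2]] := IH h1 ltac:(lia); exists i; lia.
Qed.

Lemma mem_sum m r x : 2 <= m -> 0 < r -> r <= m ->
  (x \in [seq a + b | a <- gasp_alpha m m m r, b <- gasp_beta m m m]) = P m r x.
Proof.
move=> m2 r0 rm.
have hG : forall i, i < m -> m*m <= gg m r i <= gg m r (m-1).
  move=> i hi; rewrite -{1}(gg0 m r); apply/andP; split; apply: gg_le => //; lia.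
apply/allpairsP/idP.
  case=> [[a b] /= [ha hb ->]]; move/(mem_alphaP m r a r0 rm): ha; move/mem_betaP: hb.
  case=> [[k hk ->]|hb] [ha|[i hi ->]].
  - have h : a + m * k < m*m + 2*m - 1 by nia.
    by rewrite /P h.
  - have [t [j [hj ei]]] := ggdec r i r0.
    have hmod : (gg m r i + m*k) %% m < r.
      rewrite ei ggE // (_ : m * m + j + m * t + m * k = (m + t + k) * m + j); last by lia.
      rewrite modnMDl modn_small //; lia.
    have := hG i hi => /andP [g1 g2].
    case: (ltnP (gg m r i + m*k) (2*(m*m))) => h.
      by rewrite /P h hmod /= orbT.
    have h' : gg m r i + m*k < m*m + gg m r (m-1) + m by nia.
    by rewrite /P h h' /= !orbT.
  - have h : a + b < m*m + 2*m - 1 by lia.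
    by rewrite /P h.
  - have := hG i hi => /andP [g1 g2].
    have h : 2*(m*m) <= gg m r i + b by lia.
    have h' : gg m r i + b < m*m + gg m r (m-1) + m by lia.
    by rewrite /P h h' /= !orbT.
move=> hP.
have m0 : 0 < m by lia.
case: (ltnP x (m*m)) => h1.
  exists (x %% m, m * (x %/ m)); split => /=.
  - apply/(mem_alphaP m r _ r0 rm); left; exact: ltn_pmod.
  - apply/mem_betaP; left; exists (x %/ m) => //; rewrite ltn_divLR //.
  - by rewrite addnC mulnC -divn_eq.
case: (ltnP x (m*m + 2*m - 1)) => h2.
  case: (ltnP x (m*m + m)) => h3.
    exists (x - m*m, m*m); split => /=; last by lia.
    - apply/(mem_alphaP m r _ r0 rm); left; lia.
    - apply/mem_betaP; right; lia.
  exists (m-1, x - (m-1)); split => /=; last by lia.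
  - apply/(mem_alphaP m r _ r0 rm); left; lia.
  - apply/mem_betaP; right; lia.
move: hP; rewrite /P (_ : (x < m * m + 2 * m - 1) = false) /=; last by lia.
case/orP => [/andP [h3 h4]|/andP [h3 h4]].
  have hj : (x - m*m) %% m = x %% m.
    by rewrite -(modnMDl m (x - m*m)) (_ : m * m + (x - m * m) = x) //; lia.
  have hu : (x - m*m) %/ m < m by rewrite ltn_divLR //; lia.
  exists (gg m r (0 * r + x %% m), m * ((x - m*m) %/ m)); split => /=.
  - apply/(mem_alphaP m r _ r0 rm); right; exists (0 * r + x %% m) => //.
    have := ltn_pmod x m0; lia.
  - apply/mem_betaP; left; exists ((x - m*m) %/ m) => //.
  - rewrite ggE // -hj; have := divn_eq (x - m*m) m; lia.
have [i [hi1 hi2]] := cover m r (m-1) (x - m*m) r0 rm ltac:(rewrite gg0; lia) ltac:(lia).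
exists (gg m r i, x - gg m r i); split => /=.
- apply/(mem_alphaP m r _ r0 rm); right; exists i => //; lia.
- apply/mem_betaP; right; lia.
- lia.
Qed.

Lemma size_undup_count (s : seq nat) B : (forall x, x \in s -> x < B) ->
  size (undup s) = count (mem s) (iota 0 B).
Proof.
move=> H; rewrite -size_filter; apply: perm_size; apply: uniq_perm.
- exact: undup_uniq.
- exact: filter_uniq (iota_uniq 0 B).
move=> x; rewrite mem_undup mem_filter mem_iota /=.
case h: (x \in s) => //=; have := H x h; lia.
Qed.

Lemma count_all (p : pred nat) a n : (forall x, a <= x < a + n -> p x) -> count p (iota a n) = n.
Proof.
move=> H; rewrite (eq_in_count (a2 := predT)) ?count_predT ?size_iota //.
by move=> x; rewrite mem_iota => /H ->.
Qed.

Lemma count_none (p : pred nat) a n : (forall x, a <= x < a + n -> ~~ p x) -> count p (iota a n) = 0.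
Proof.
move=> H; rewrite (eq_in_count (a2 := pred0)) ?count_pred0 //.
by move=> x; rewrite mem_iota => /H /negbTE ->.
Qed.

Lemma count_block m r c : r <= m -> count (fun x => x %% m < r) (iota (c*m) m) = r.
Proof.
move=> rm; rewrite -[c*m]addn0 iotaDl count_map.
rewrite (eq_in_count (a2 := fun y => y < r)); last first.
  by move=> y; rewrite mem_iota /= => h; rewrite modnMDl modn_small //; lia.
rewrite (_ : iota 0 m = iota 0 (r + (m-r))); last by congr iota; lia.
rewrite iotaD count_cat count_all; last by lia.
by rewrite count_none ?addn0 // => x; lia.
Qed.

Lemma count_mid m r a k : 2 <= m -> r <= m -> a = m*m + 2*m -> a + m*k <= 2*(m*m) ->
  count (P m r) (iota a (m*k)) = r*k.
Proof.
move=> m2 rm ->; elim: k => [|k IH] hk; first by rewrite !muln0.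
rewrite (mulnS m k) (addnC m (m*k)) iotaD count_cat IH; last by lia.
rewrite (eq_in_count (a2 := fun x => x %% m < r)); last first.
  move=> x; rewrite mem_iota => /andP [h1 h2]; rewrite /P.
  rewrite (_ : (x < m * m + 2 * m - 1) = false); last by lia.
  rewrite (_ : (x < 2 * (m*m)) = true); last by lia.
  by rewrite (_ : (2 * (m*m) <= x) = false) /= ?orbF //; lia.
rewrite (_ : m * m + 2 * m + m * k = (m + 2 + k) * m); last by lia.
rewrite count_block //; lia.
Qed.

Lemma N_formula m r : 2 <= m -> 0 < r -> r <= m ->
  sumset_size (gasp_alpha m m m r) (gasp_beta m m m) =
  m*m + (2*m - 1 + (m - 1 < r)) + r*(m-2) + (gg m r (m-1) + m - m*m).
Proof.
move=> m2 r0 rm.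
have hG : m*m <= gg m r (m-1) by rewrite -{1}(gg0 m r); apply: gg_le => //; lia.
have hmm : 2*m <= m*m by nia.
have hm2 : m*(m-2) = m*m - 2*m by rewrite mulnBr (mulnC m 2).
rewrite /sumset_size (size_undup_count _ (m*m + gg m r (m-1) + m)); last first.
  move=> x; rewrite mem_sum // /P.
  case/orP => [/orP [h|/andP [h _]]|/andP [_ h]]; lia.
rewrite (eq_count (a2 := P m r)); last by move=> x; exact: mem_sum.
rewrite (_ : m*m + gg m r (m-1) + m = m*m + ((2*m-1) + (1 + (m*(m-2) + (gg m r (m-1) + m - m*m))))); last by lia.
rewrite !iotaD !count_cat add0n.
rewrite count_all; last by move=> x h; rewrite /P (_ : x < m*m + 2*m - 1) //; lia.
rewrite count_all; last by move=> x h; rewrite /P (_ : x < m*m + 2*m - 1) //; lia.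
rewrite (count_mid m r _ (m-2) m2 rm).
 3: rewrite hm2; lia. 2: lia.
have -> : count (P m r) (iota (m * m + (2 * m - 1)) 1) = (m - 1 < r).
  rewrite /= addn0 /P (_ : m * m + (2 * m - 1) < m * m + 2 * m - 1 = false); last by lia.
  rewrite (_ : m * m + (2 * m - 1) < 2 * (m * m)); last by lia.
  rewrite (_ : 2 * (m * m) <= m * m + (2 * m - 1) = false) /= ?andbF ?orbF; last by lia.
  rewrite (_ : m * m + (2 * m - 1) = (m + 1) * m + (m - 1)); last by lia.
  rewrite modnMDl modn_small //; lia.
rewrite count_all; last first.
  move=> x h; have h1 : (2*(m*m) <= x < m*m + gg m r (m-1) + m) by rewrite hm2 in h; lia.
  by rewrite /P h1 !orbT.
move: hG; generalize (gg m r (m-1)) => G hG.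
lia.
Qed.

Theorem proposition1 (n : nat) (hn : 1 <= n) :
  (1 <= n <= n ^ 2) /\
  (forall r : nat, 1 <= r <= n ^ 2 -> N_gasp n n <= N_gasp n r) /\
  N_gasp n n = (if n == 1 then 3 else n ^ 4 + 2 * n ^ 3 + 2 * n ^ 2 - n - 2).
Proof.
case: (ltnP 1 n) => hn2; last first.
  have -> : n = 1 by lia.
  split; first by [].
  split; first by move=> r; rewrite (_ : 1^2 = 1) // => hr; have -> : r = 1 by lia.
  by vm_compute.
have e2 : n^2 = n*n by rewrite expnS expn1.
have hm : 2 <= n^2 by rewrite e2; nia.
have NF : forall r, 1 <= r <= n^2 -> N_gasp n r =
   n^2*n^2 + (2*n^2 - 1 + (n^2 - 1 < r)) + r*(n^2-2) + (gg (n^2) r (n^2-1) + n^2 - n^2*n^2).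
  move=> r hr; rewrite /N_gasp N_formula //; lia.
have hnn : 1 <= n <= n^2 by rewrite e2; nia.
have Gn : gg (n^2) n (n^2-1) = n^2*n^2 + (n-1) + n^2*(n-1).
  rewrite (_ : n^2 - 1 = (n-1)*n + (n-1)); last by rewrite e2; nia.
  rewrite ggE //; lia.
have hb : (n^2 - 1 < n) = false by rewrite e2; nia.
rewrite (NF n hnn) Gn hb (_ : n == 1 = false); last by lia.
split; first exact: hnn.
split.
  move=> r hr; rewrite (NF r hr) /gg.
  have r0 : 0 < r by lia.
  have := arith n r ((n^2-1) %/ r) ((n^2-1) %% r) hn2 hr (divn_eq _ _) (ltn_pmod (n^2-1) r0).
  move: ((n^2-1) %/ r) ((n^2-1) %% r) => q s h.
  have : n^2 * n^2 <= n^2*n^2 by [].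
  move: (n^2 * n^2) => M _.
  have h2 : n^2 * (n - 1) = n^2*n - n^2 by rewrite mulnBr muln1.
  have h3 : n * (n^2-2) = n^2*n - 2*n by rewrite mulnC mulnBl.
  have h4 : r * (n^2-2) = (n^2-2)*r by rewrite mulnC.
  have h5 : n^2 * q = n^2 * q by [].
  lia.
have e1 : n^4 = n^2*n^2 by rewrite -expnD.
have e3 : n^3 = n^2*n by rewrite -expnSr.
rewrite e1 e3.
have h2 : n^2 * (n - 1) = n^2*n - n^2 by rewrite mulnBr muln1.
have h3 : n * (n^2-2) = n^2*n - 2*n by rewrite mulnC mulnBl.
have h6 : n <= n^2 * n by rewrite e2; nia.
have h7 : 2 * n <= n^2 by rewrite e2; nia.
lia.
Qed.
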